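(* The variety $\mathsf{V}(S_{(4,453)})$ is the ai-semiring variety defined by the identities $x^2y\approx xy$, $xy^2\approx xy$, $xyz\approx xzy$, $x^2\approx x^2+x$, $xy\approx xy+xyz$, $x+yz\approx x+yz+yx$.
   Context: An ai-semiring is an algebra $(S,+,\cdot)$ with $(S,+)$ a semilattice, $(S,\cdot)$ a semigroup, and both distributive laws. $\mathsf{V}(S)$ is the variety generated by $S$; ''the ai-semiring variety defined by identities $\Sigma$'' is the class of all ai-semirings satisfying $\Sigma$. $S_{(4,453)}$ has carrier $\{1,2,3,4\}$; addition: $x+x=x$, $2+x=x$, $1+x=1$ for all $x$, $3+4=1$; multiplication (row $a$, column $b$ gives $a\cdot b$): row $1$: $1,4,1,4$; row $2$: $2,2,2,2$; row $3$: $1,4,1,4$; row $4$: $4,4,4,4$. *)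

(* Defs.v *)
Record aisemiring := AISemiring {
  carrier :> Type;
  sadd : carrier -> carrier -> carrier;
  smul : carrier -> carrier -> carrier;
  sadd_assoc : forall x y z, sadd x (sadd y z) = sadd (sadd x y) z;
  sadd_comm : forall x y, sadd x y = sadd y x;
  sadd_idem : forall x, sadd x x = x;
  smul_assoc : forall x y z, smul x (smul y z) = smul (smul x y) z;
  smul_addl : forall x y z, smul (sadd x y) z = sadd (smul x z) (smul y z);
  smul_addr : forall x y z, smul x (sadd y z) = sadd (smul x y) (smul x z)
}.

Inductive E4 : Type := e1 | e2 | e3 | e4.

Definition add453 (a b : E4) : E4 :=
  match a, b with
  | e1, _ => e1 | _, e1 => e1
  | e2, x => x | x, e2 => x
  | e3, e3 => e3 | e4, e4 => e4
  | e3, e4 => e1 | e4, e3 => e1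
  end.

Definition mul453 (a b : E4) : E4 :=
  match a, b with
  | e1, e1 => e1 | e1, e2 => e4 | e1, e3 => e1 | e1, e4 => e4
  | e2, _ => e2
  | e3, e1 => e1 | e3, e2 => e4 | e3, e3 => e1 | e3, e4 => e4
  | e4, _ => e4
  end.

Definition S453 : aisemiring.
Proof.
  refine (@AISemiring E4 add453 mul453 _ _ _ _ _ _);
  intros; repeat match goal with x : E4 |- _ => destruct x; clear x end; reflexivity.
Defined.

(** Variety generated by an ai-semiring S: V(S) = HSP(S), i.e. the class of
    homomorphic images of subalgebras of direct powers of S. *)

Definition padd (S : aisemiring) (I : Type) (f g : I -> S) : I -> S :=
  fun i => sadd S (f i) (g i).
Definition pmul (S : aisemiring) (I : Type) (f g : I -> S) : I -> S :=
  fun i => smul S (f i) (g i).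

Definition in_variety_generated_by (S : aisemiring) (A : aisemiring) : Prop :=
  exists (I : Type) (B : (I -> S) -> Prop)
         (closed_add : forall f g, B f -> B g -> B (padd S I f g))
         (closed_mul : forall f g, B f -> B g -> B (pmul S I f g))
         (h : {f : I -> S | B f} -> A),
    (forall y : A, exists x, h x = y) /\
    (forall f g (Bf : B f) (Bg : B g),
        h (exist _ (padd S I f g) (closed_add f g Bf Bg))
        = sadd A (h (exist _ f Bf)) (h (exist _ g Bg))) /\
    (forall f g (Bf : B f) (Bg : B g),
        h (exist _ (pmul S I f g) (closed_mul f g Bf Bg))
        = smul A (h (exist _ f Bf)) (h (exist _ g Bg))).

Definition satisfies_Sigma (A : aisemiring) : Prop :=
  let a := sadd A in let m := smul A in
  (forall x y, m (m x x) y = m x y) /\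
  (forall x y, m x (m y y) = m x y) /\
  (forall x y z, m (m x y) z = m (m x z) y) /\
  (forall x, m x x = a (m x x) x) /\
  (forall x y z, m x y = a (m x y) (m (m x y) z)) /\
  (forall x y z, a x (m y z) = a (a x (m y z)) (m y x)).

(* Main.v *)
Require Import Defs.
From Stdlib Require Import List Permutation Classical ClassicalEpsilon FunctionalExtensionality ProofIrrelevance.
Import ListNotations.

Inductive term (V : Type) := Var (v : V) | TAdd (t1 t2 : term V) | TMul (t1 t2 : term V).
Arguments Var {V}. Arguments TAdd {V}. Arguments TMul {V}.
Definition word (V : Type) := (V * list V)%type.
Definition wcat {V} (u w : word V) : word V := (fst u, snd u ++ fst w :: snd w).
Fixpoint wl {V} (t : term V) : list (word V) :=
  match t with
  | Var v => [(v, [])]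
  | TAdd a b => wl a ++ wl b
  | TMul a b => flat_map (fun u => map (wcat u) (wl b)) (wl a)
  end.

Section Semi.
Variable A : aisemiring.
Local Notation "x + y" := (sadd A x y).
Local Notation "x * y" := (smul A x y).
Definition le (a b : A) := a + b = b.
Lemma le_refl a : le a a. Proof. unfold le; apply sadd_idem. Qed.
Lemma le_trans a b c : le a b -> le b c -> le a c.
Proof. unfold le; intros H1 H2. rewrite <- H2, sadd_assoc, H1; reflexivity. Qed.
Lemma le_addl a b : le a (a + b). Proof. unfold le; rewrite sadd_assoc, sadd_idem; auto. Qed.
Lemma le_addr b a : le b (a + b). Proof. unfold le. rewrite (sadd_comm A a b), sadd_assoc, sadd_idem; auto. Qed.
Lemma le_add a b c : le a c -> le b c -> le (a + b) c.
Proof. unfold le; intros H1 H2; rewrite <- sadd_assoc, H2; auto. Qed.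
Lemma le_antisym a b : le a b -> le b a -> a = b.
Proof. unfold le; intros H1 H2. rewrite <- H2 at 1. rewrite sadd_comm; auto. Qed.

Fixpoint ev {V} (r : V -> A) (t : term V) : A :=
  match t with Var v => r v | TAdd a b => ev r a + ev r b | TMul a b => ev r a * ev r b end.
Definition Pf (m : A) (l : list A) := fold_left (smul A) l m.
Definition evw {V} (r : V -> A) (w : word V) := Pf (r (fst w)) (map r (snd w)).
Definition oadd (x y : option A) :=
  match x, y with None, _ => y | _, None => x | Some a, Some b => Some (a + b) end.
Definition omul (x y : option A) :=
  match x, y with Some a, Some b => Some (a * b) | _, _ => None end.
Fixpoint evL {V} r (L : list (word V)) : option A :=
  match L with [] => None | w :: L' => oadd (Some (evw r w)) (evL r L') end.

Lemma P_mul m n l : Pf (m * n) l = m * Pf n l.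
Proof. unfold Pf; revert n; induction l; intros; simpl; auto. rewrite <- smul_assoc; apply IHl. Qed.

Lemma evw_cat {V} (r : V -> A) u w : evw r (wcat u w) = evw r u * evw r w.
Proof.
  destruct u as [h T], w as [h' T']; unfold evw, wcat; simpl. rewrite map_app; simpl.
  unfold Pf at 1; rewrite fold_left_app; simpl. apply P_mul.
Qed.

Lemma evL_app {V} (r : V -> A) L1 L2 : evL r (L1 ++ L2) = oadd (evL r L1) (evL r L2).
Proof.
  induction L1; simpl. destruct (evL r L2); auto. rewrite IHL1.
  destruct (evL r L1), (evL r L2); simpl; auto; rewrite sadd_assoc; auto.
Qed.
Lemma evL_map {V} (r : V -> A) u L : evL r (map (wcat u) L) = omul (Some (evw r u)) (evL r L).
Proof. induction L; simpl; auto. rewrite IHL, evw_cat. destruct (evL r L); simpl; auto. rewrite smul_addr; auto. Qed.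
Lemma evL_prod {V} (r : V -> A) L1 L2 :
  evL r (flat_map (fun u => map (wcat u) L2) L1) = omul (evL r L1) (evL r L2).
Proof.
  induction L1; simpl; auto. rewrite evL_app, evL_map, IHL1.
  destruct (evL r L1), (evL r L2); simpl; auto. rewrite smul_addl; auto.
Qed.
Lemma ev_wl {V} (r : V -> A) t : evL r (wl t) = Some (ev r t).
Proof.
  induction t; simpl. reflexivity.
  rewrite evL_app, IHt1, IHt2; auto. rewrite evL_prod, IHt1, IHt2; auto.
Qed.
Lemma evL_nonnone {V} (r : V -> A) L : L <> [] -> evL r L <> None.
Proof. destruct L; simpl. congruence. destruct (evL r L); discriminate. Qed.

Lemma evL_le {V} (r : V -> A) w L s : In w L -> evL r L = Some s -> le (evw r w) s.
Proof.
  revert s; induction L as [|w' L IH]; simpl; intros s Hin Hs; [contradiction|].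
  destruct (evL r L) as [s0|] eqn:E; simpl in Hs; injection Hs as <-.
  - destruct Hin as [<-|Hin]. apply le_addl. eapply le_trans. apply (IH s0 Hin eq_refl). apply le_addr.
  - destruct Hin as [<-|Hin]. apply le_refl. exfalso; apply (evL_nonnone r L); auto. destruct L; simpl in *; auto; congruence.
Qed.
Lemma evL_bound {V} (r : V -> A) L s x :
  (forall w, In w L -> le (evw r w) x) -> evL r L = Some s -> le s x.
Proof.
  revert s; induction L; simpl; intros s H Hs; [discriminate|].
  destruct (evL r L) as [s0|] eqn:E; simpl in Hs; injection Hs as <-.
  - apply le_add; auto.
  - auto.
Qed.
End Semi.
Section ASide.
Variable A : aisemiring.
Hypothesis HS : satisfies_Sigma A.
Local Notation "x + y" := (sadd A x y).
Local Notation "x * y" := (smul A x y).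
Local Notation P := (Pf A).

Lemma S1 x y : (x * x) * y = x * y. Proof. apply (proj1 HS). Qed.
Lemma S2 x y : x * (y * y) = x * y. Proof. apply (proj1 (proj2 HS)). Qed.
Lemma S3 x y z : (x * y) * z = (x * z) * y. Proof. apply (proj1 (proj2 (proj2 HS))). Qed.
Lemma S4 x : x * x = (x * x) + x. Proof. apply (proj1 (proj2 (proj2 (proj2 HS)))). Qed.
Lemma S5 x y z : x * y = (x * y) + ((x * y) * z). Proof. apply (proj1 (proj2 (proj2 (proj2 (proj2 HS))))). Qed.
Lemma S6 x y z : x + (y * z) = (x + (y * z)) + (y * x). Proof. apply (proj2 (proj2 (proj2 (proj2 (proj2 HS))))). Qed.

Lemma Pperm l l' : Permutation l l' -> forall m, P m l = P m l'.
Proof.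
  induction 1; intros m; unfold Pf in *; simpl; auto.
  rewrite S3; auto. rewrite IHPermutation1; auto.
Qed.

Lemma Psnoc l a m : In a l -> P m (l ++ [a]) = P m l.
Proof.
  intros Hin. destruct (in_split _ _ Hin) as [l1 [l2 ->]].
  rewrite <- app_assoc. simpl.
  rewrite (Pperm (l1 ++ a :: l2 ++ [a]) (a :: a :: l1 ++ l2)).
  rewrite (Pperm (l1 ++ a :: l2) (a :: l1 ++ l2)).
  unfold Pf; simpl. rewrite <- smul_assoc, S2. reflexivity.
  apply Permutation_sym, Permutation_middle.
  eapply Permutation_trans. apply Permutation_sym, Permutation_middle.
  apply perm_skip. rewrite app_assoc. apply Permutation_sym, Permutation_cons_append.
Qed.

Lemma Pext l' l : incl l' l -> forall m, P m (l ++ l') = P m l.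
Proof.
  induction l' as [|a l' IH]; intros Hi m. rewrite app_nil_r; auto.
  assert (E: P m (l ++ a :: l') = P (P m (l ++ [a])) l').
  { unfold Pf; rewrite <- fold_left_app, <- app_assoc; reflexivity. }
  rewrite E, Psnoc by (apply Hi; left; auto).
  transitivity (P m (l ++ l')); [unfold Pf; rewrite fold_left_app; reflexivity|].
  apply (IH (fun x Hx => Hi x (or_intror Hx)) m).
Qed.

Lemma Pset m l1 l2 : incl l1 l2 -> incl l2 l1 -> P m l1 = P m l2.
Proof.
  intros H12 H21. rewrite <- (Pext l2 l1 H21 m).
  rewrite (Pperm _ _ (Permutation_app_comm l1 l2)). apply Pext; auto.
Qed.

Lemma Pnorm a l1 l2 : l1 <> [] -> l2 <> [] ->
  (forall v, In v (a :: l1) <-> In v (a :: l2)) -> P a l1 = P a l2.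
Proof.
  intros N1 N2 Hiff.
  assert (St : forall l, l <> [] -> P a l = P a (a :: l)).
  { intros [|b l] N; [congruence|]. unfold Pf; simpl. rewrite S1. reflexivity. }
  rewrite (St l1 N1), (St l2 N2). apply Pset; intros v Hv; apply Hiff; auto.
Qed.
End ASide.

Definition cond {V} (w : word V) (Q : list (word V)) : Prop :=
  match snd w with
  | [] => In (fst w, []) Q \/ exists T, T <> [] /\ (forall t, In t T -> t = fst w) /\ In (fst w, T) Q
  | _ => (exists T0, T0 <> [] /\ In (fst w, T0) Q) /\
         exists hu Tu, In (hu, Tu) Q /\ forall v, In v (hu :: Tu) -> v = fst w \/ In v (snd w)
  end.

Lemma cond_le (A : aisemiring) (HS : satisfies_Sigma A) {V} (r : V -> A) w Q X :
  cond w Q -> (forall u, In u Q -> le A (evw A r u) X) -> le A (evw A r w) X.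
Proof.
  destruct w as [x T]; unfold cond; simpl. destruct T as [|t T'].
  - intros [Hin | [T [HT [Hall Hin]]]] Hle.
    + apply (Hle _ Hin).
    + eapply le_trans; [| apply (Hle _ Hin)]. unfold evw; simpl.
      change (Pf A (r x) []) with (r x).
      rewrite (Pnorm A HS (r x) (map r T) [r x]).
      * unfold Pf; simpl. unfold le. rewrite sadd_comm, <- (S4 A HS); auto.
      * destruct T; simpl; congruence.
      * congruence.
      * intros v; simpl; split; intros H.
        -- destruct H as [->|H]; auto. apply in_map_iff in H as [t [<- Ht]]; rewrite (Hall t Ht); auto.
        -- destruct H as [->|[->|[]]]; auto.
  - intros [[T0 [HT0 H0]] [hu [Tu [Hu Hinc]]]] Hle.
    destruct T0 as [|t0 T0]; [congruence|].
    assert (H1 : le A (smul A (r x) (evw A r (hu, Tu))) X).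
    { eapply le_trans with (sadd A (evw A r (hu, Tu)) (smul A (r x) (Pf A (r t0) (map r T0)))).
      - unfold le; rewrite sadd_comm; symmetry; apply (S6 A HS).
      - apply le_add. apply Hle; auto.
        rewrite <- P_mul. apply (Hle _ H0). }
    eapply le_trans; [| exact H1].
    assert (E : evw A r (x, t :: T') =
                smul A (smul A (r x) (evw A r (hu, Tu))) (Pf A (r t) (map r T'))).
    { unfold evw; cbn [fst snd]. rewrite <- (P_mul A (r x) (r hu) (map r Tu)).
      rewrite <- (P_mul A (Pf A (smul A (r x) (r hu)) (map r Tu)) (r t) (map r T')).
      transitivity (Pf A (r x) ((r hu :: map r Tu) ++ (r t :: map r T')));
        [| unfold Pf; rewrite fold_left_app; reflexivity].
      change (map r (t :: T')) with (r t :: map r T').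
      symmetry; apply (Pnorm A HS); [discriminate | discriminate |].
      intros v; split; intros Hv.
      - destruct Hv as [<-|Hv]; [left; auto|]. apply in_app_or in Hv as [Hv|Hv].
        + change (r hu :: map r Tu) with (map r (hu :: Tu)) in Hv.
          apply in_map_iff in Hv as [y [<- Hy]].
          destruct (Hinc y Hy) as [->|Hy']; [left; auto | right].
          change (r t :: map r T') with (map r (t :: T')). apply in_map; auto.
        + right; auto.
      - destruct Hv as [<-|Hv]; [left; auto| right; apply in_or_app; right; auto]. }
    rewrite E. unfold le; rewrite sadd_comm; symmetry; apply (S5 A HS).
Qed.

Lemma evL_closed (X : E4 -> Prop) (HX : forall a b, X a -> X b -> X (add453 a b)) {V}
  (s : V -> E4) L v : (forall w, In w L -> X (evw S453 s w)) -> evL S453 s L = Some v -> X v.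
Proof.
  revert v; induction L; simpl; intros v H Hs; [discriminate|].
  destruct (evL S453 s L) as [s0|] eqn:E; simpl in Hs; injection Hs as <-.
  - apply HX; auto.
  - auto.
Qed.

Lemma P2 l : Pf S453 e2 l = e2.
Proof. induction l; unfold Pf in *; simpl; auto. Qed.
Lemma P4 l : Pf S453 e4 l = e4.
Proof. induction l; unfold Pf in *; simpl; auto. Qed.
Lemma P13_1 l s : (s = e1 \/ s = e3) -> (forall a, In a l -> a = e1 \/ a = e3) -> l <> [] -> Pf S453 s l = e1.
Proof.
  revert s; induction l as [|a l IH]; intros s Hs Hl N; [congruence|].
  unfold Pf; cbn [fold_left].
  assert (Ha : smul S453 s a = e1).
  { destruct (Hl a (or_introl eq_refl)) as [->| ->]; destruct Hs as [->| ->]; reflexivity. }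
  rewrite Ha. destruct l as [|b l]. reflexivity.
  apply IH; auto. intros; apply Hl; right; auto. discriminate.
Qed.
Lemma P13_4 l s : (s = e1 \/ s = e3) -> (exists a, In a l /\ (a = e2 \/ a = e4)) -> Pf S453 s l = e4.
Proof.
  revert s; induction l as [|a l IH]; intros s Hs [b [Hb Hb']]; [destruct Hb|].
  unfold Pf; cbn [fold_left]. destruct Hb as [->|Hb].
  - assert (Ha : smul S453 s b = e4).
    { destruct Hb' as [->| ->]; destruct Hs as [->| ->]; reflexivity. }
    rewrite Ha. apply P4.
  - destruct a; destruct Hs as [->| ->]; simpl; try apply P4; try apply P2;
    apply IH; eauto.
Qed.

Definition dec (P : Prop) := excluded_middle_informative P.

Lemma sep {V} (w : word V) Q : Q <> [] ->
  (forall (sg : V -> E4) s, evL S453 sg Q = Some s -> le S453 (evw S453 sg w) s) -> cond w Q.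
Proof.
  intros HQ H. destruct w as [x T]. unfold cond; cbn [fst snd]. destruct T as [|t T'].
  - apply NNPP; intro Hn.
    pose (sg := fun v => if dec (v = x) then e3 else e2).
    destruct (evL S453 sg Q) as [s|] eqn:E; [|exfalso; exact (evL_nonnone _ _ _ HQ E)].
    assert (Hs : s = e2 \/ s = e4).
    { apply (evL_closed (fun s => s = e2 \/ s = e4)) with (s := sg) (L := Q); auto.
      - intros a b [->| ->] [->| ->]; simpl; auto.
      - intros [h T] Hin. unfold evw; cbn [fst snd]. destruct T as [|t T].
        + change (Pf S453 (sg h) (map sg [])) with (sg h). unfold sg.
          destruct (dec (h = x)) as [->|]; [|auto]. exfalso; apply Hn; left; auto.
        + change (sg h) with (if dec (h = x) then e3 else e2). destruct (dec (h = x)) as [->|Hhx].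
          * right. apply P13_4; auto.
            destruct (classic (exists a, In a (t::T) /\ a <> x)) as [[a [Ha Hax]]|Hno].
            -- exists (sg a); split; [apply in_map; auto| unfold sg; destruct (dec (a = x)); [contradiction|auto]].
            -- exfalso; apply Hn; right; exists (t::T); split; [discriminate|split; [|auto]].
               intros a Ha; apply NNPP; intro; apply Hno; eauto.
          * left; apply P2. }
    specialize (H sg s E). unfold evw in H; cbn [fst snd map] in H.
    change (Pf S453 (sg x) []) with (sg x) in H.
    unfold sg in H. destruct (dec (x = x)); [|congruence].
    destruct Hs; subst; unfold le in H; simpl in H; discriminate.
  - apply NNPP; intro Hn.
    destruct (classic (exists hu Tu, In (hu,Tu) Q /\ forall v, In v (hu::Tu) -> v = x \/ In v (t::T')))
      as [HB|HnB].
    + assert (HnA : forall T0, T0 <> [] -> ~ In (x,T0) Q) by (intros T0 N I; apply Hn; split; eauto).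
      pose (sg := fun v => if dec (v = x) then e3 else e2).
      destruct (evL S453 sg Q) as [s|] eqn:E; [|exfalso; exact (evL_nonnone _ _ _ HQ E)].
      assert (Hs : s = e2 \/ s = e3).
      { apply (evL_closed (fun s => s = e2 \/ s = e3)) with (s := sg) (L := Q); auto.
        - intros a b [->| ->] [->| ->]; simpl; auto.
        - intros [h T] Hin. unfold evw; cbn [fst snd]. destruct T as [|t0 T].
          + change (Pf S453 (sg h) (map sg [])) with (sg h). unfold sg.
            destruct (dec (h = x)); auto.
          + change (sg h) with (if dec (h = x) then e3 else e2). destruct (dec (h = x)) as [->|Hhx].
            * exfalso; apply (HnA (t0 :: T)); auto; discriminate.
            * left; apply P2. }
      specialize (H sg s E). unfold evw in H; cbn [fst snd] in H.
      assert (Hx : sg x = e3) by (unfold sg; destruct (dec (x = x)); congruence).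
      rewrite Hx in H.
      destruct (classic (forall a, In a (t::T') -> a = x)) as [Hall|Hnall].
      * rewrite P13_1 in H; auto; [| intros a Ha; apply in_map_iff in Ha as [y [<- Hy]];
                                     rewrite (Hall y Hy), Hx; auto | discriminate].
        destruct Hs; subst; unfold le in H; simpl in H; discriminate.
      * rewrite P13_4 in H; auto.
        -- destruct Hs; subst; unfold le in H; simpl in H; discriminate.
        -- apply NNPP; intro Hno; apply Hnall; intros a Ha; apply NNPP; intro Hax; apply Hno.
           exists (sg a); split; [apply in_map; auto|]. unfold sg; destruct (dec (a = x)); [contradiction|auto].
    + pose (sg := fun v => if dec (v = x \/ In v (t::T')) then e3 else e2).
      destruct (evL S453 sg Q) as [s|] eqn:E; [|exfalso; exact (evL_nonnone _ _ _ HQ E)].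
      assert (Hs : s = e2 \/ s = e4).
      { apply (evL_closed (fun s => s = e2 \/ s = e4)) with (s := sg) (L := Q); auto.
        - intros a b [->| ->] [->| ->]; simpl; auto.
        - intros [h T] Hin. unfold evw; cbn [fst snd].
          assert (Hex : exists v, In v (h :: T) /\ ~ (v = x \/ In v (t :: T'))).
          { apply NNPP; intro Hno; apply HnB; exists h, T; split; auto.
            intros v Hv; apply NNPP; intro; apply Hno; eauto. }
          destruct Hex as [v [Hv Hnv]].
          change (sg h) with (if dec (h = x \/ In h (t :: T')) then e3 else e2).
          destruct (dec (h = x \/ In h (t :: T'))) as [Hh|Hh].
          * right. apply P13_4; auto. destruct Hv as [<-|Hv]; [contradiction|].
            exists (sg v); split; [apply in_map; auto|]. unfold sg; destruct dec; [contradiction|auto].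
          * left; apply P2. }
      specialize (H sg s E). unfold evw in H; cbn [fst snd] in H.
      assert (Hx : sg x = e3) by (unfold sg; destruct dec as [|n]; [auto|exfalso; apply n; auto]).
      rewrite Hx, P13_1 in H; auto.
      * destruct Hs; subst; unfold le in H; simpl in H; discriminate.
      * intros a Ha; apply in_map_iff in Ha as [y [<- Hy]]. unfold sg; destruct dec as [|n]; [auto|exfalso; apply n; auto].
      * discriminate.
Qed.

Lemma wl_ne {V} (t : term V) : wl t <> [].
Proof. intro Hnil. pose proof (ev_wl S453 (fun _ => e1) t) as H. rewrite Hnil in H; discriminate. Qed.

Lemma complete (A : aisemiring) (HS : satisfies_Sigma A) {V} (p q : term V) :
  (forall sg, ev S453 sg p = ev S453 sg q) -> forall r : V -> A, ev A r p = ev A r q.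
Proof.
  assert (One : forall p q : term V, (forall sg, ev S453 sg p = ev S453 sg q) ->
                forall r, le A (ev A r p) (ev A r q)).
  { intros p0 q0 Heq r. apply (evL_bound A r (wl p0)); [| apply ev_wl].
    intros w Hw. apply (cond_le A HS r w (wl q0)).
    - apply sep. apply wl_ne.
      intros sg s Hs. rewrite ev_wl in Hs; injection Hs as <-. rewrite <- Heq.
      apply (evL_le S453 sg w (wl p0)); auto; apply ev_wl.
    - intros u Hu; apply (evL_le A r u (wl q0)); auto; apply ev_wl. }
  intros Heq r; apply le_antisym; apply One; auto.
Qed.

Definition Bp (A : aisemiring) (f : (A -> E4) -> S453) : Prop :=
  exists t : term A, forall sg, f sg = ev S453 sg t.

Definition hh (A : aisemiring) (x : {f : (A -> E4) -> S453 | Bp A f}) : A :=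
  ev A (fun a => a) (proj1_sig (constructive_indefinite_description _ (proj2_sig x))).

Lemma hh_spec (A : aisemiring) (HS : satisfies_Sigma A) f (Bf : Bp A f) t :
  (forall sg, f sg = ev S453 sg t) -> hh A (exist _ f Bf) = ev A (fun a => a) t.
Proof.
  intros H. unfold hh; simpl.
  match goal with |- context [proj1_sig ?c] => pose proof (proj2_sig c) as Ht'; simpl in Ht'; set (t' := proj1_sig c) in * end.
  apply (complete A HS t' t). intro sg. rewrite <- (Ht' sg). apply H.
Qed.

Theorem proposition4p2 :
  forall A : aisemiring,
    in_variety_generated_by S453 A <-> satisfies_Sigma A.
Proof.
  intros A; split.
  - intros [I [B [ca [cm [h [Hsurj [Hadd Hmul]]]]]]].
    assert (hext : forall f g (Bf : B f) (Bg : B g), (forall i, f i = g i) ->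
                   h (exist _ f Bf) = h (exist _ g Bg)).
    { intros f g Bf Bg Hfg. assert (f = g) by (apply functional_extensionality; auto).
      subst g. rewrite (proof_irrelevance _ Bf Bg); reflexivity. }
    unfold satisfies_Sigma; repeat split; intros.
    all: repeat match goal with
         | v : carrier _ |- _ => destruct (Hsurj v) as [[? ?] <-]
         end.
    all: repeat rewrite <- Hmul; repeat rewrite <- Hadd; repeat rewrite <- Hmul; repeat rewrite <- Hadd.
    all: apply hext; intro i; unfold pmul, padd.
    all: repeat match goal with |- context [?f ?j] => is_var f; is_var j; destruct (f j) end; reflexivity.
  - intros HS.
    exists (A -> E4), (Bp A).
    assert (ca : forall f g, Bp A f -> Bp A g -> Bp A (padd S453 (A -> E4) f g)).
    { intros f g [t1 H1] [t2 H2]; exists (TAdd t1 t2); intros; unfold padd; simpl; rewrite H1, H2; auto. }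
    assert (cm : forall f g, Bp A f -> Bp A g -> Bp A (pmul S453 (A -> E4) f g)).
    { intros f g [t1 H1] [t2 H2]; exists (TMul t1 t2); intros; unfold pmul; simpl; rewrite H1, H2; auto. }
    exists ca, cm, (hh A). split; [|split].
    + intros y. assert (Hy : Bp A (fun sg => sg y)) by (exists (Var y); reflexivity).
      exists (exist _ _ Hy).
      apply (hh_spec A HS _ _ (Var y)); reflexivity.
    + intros f g Bf Bg. pose proof Bf as [t1 H1]. pose proof Bg as [t2 H2].
      transitivity (ev A (fun a => a) (TAdd t1 t2)).
      * apply hh_spec; auto. intros; unfold padd; simpl; rewrite H1, H2; auto.
      * simpl; f_equal; symmetry; apply hh_spec; auto.
    + intros f g Bf Bg. pose proof Bf as [t1 H1]. pose proof Bg as [t2 H2].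
      transitivity (ev A (fun a => a) (TMul t1 t2)).
      * apply hh_spec; auto. intros; unfold pmul; simpl; rewrite H1, H2; auto.
      * simpl; f_equal; symmetry; apply hh_spec; auto.
Qed.
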